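(* Let $S$ be a state of a $1$-dimensional Hegselmann–Krause system with social network $G=(V,E)$ and confidence bound $\varepsilon>0$, and let $c\in\mathbb{R}$. Let $V_\ell=\{v\in V: x_v\le c\}$, $V_r=V\setminus V_\ell$, and $E_{\ell,r}=\{\{u,w\}\in E_I: u\in V_\ell,\ w\in V_r\}$. Then $$\sum_{v\in V}|N_v|\,|m_v|\ \ge\ 2\sum_{\{u,w\}\in E_{\ell,r}}|x_u-x_w|.$$
   Context: A $1$-dimensional Hegselmann–Krause system has a finite undirected graph $G=(V,E)$ (social network), a confidence bound $\varepsilon>0$, and a state given by positions $x_v\in\mathbb{R}$. In a state, $N_v=\{u:\{u,v\}\in E,\ |x_u-x_v|\le\varepsilon\}\cup\{v\}$ is the influencing neighborhood of $v$, $m_v=\frac{1}{|N_v|}\sum_{u\in N_v}(x_u-x_v)$ is its movement, and $E_I=\{\{u,v\}\in E:|x_u-x_v|\le\varepsilon\}$ is the edge set of the influence network. *)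

(* Defs.v *)
From HB Require Import structures.
From mathcomp Require Import all_boot all_order all_algebra.
Set Implicit Arguments. Unset Strict Implicit. Unset Printing Implicit Defensive.
Import Order.TTheory GRing.Theory Num.Theory.
Local Open Scope ring_scope.

(* Social network: a finite simple undirected graph on the finType V,
   given by a symmetric irreflexive adjacency relation e.
   A state is a position map x : V -> R. *)

Definition simple_graph (V : finType) (e : rel V) : Prop :=
  symmetric e /\ irreflexive e.

Definition HK_nbhd (R : realFieldType) (V : finType) (e : rel V) (eps : R)
  (x : V -> R) (v : V) : {set V} :=
  [set u | e u v && (`|x u - x v| <= eps)] :|: [set v].

Definition HK_move (R : realFieldType) (V : finType) (e : rel V) (eps : R)
  (x : V -> R) (v : V) : R :=
  (#|HK_nbhd e eps x v|%:R)^-1 * \sum_(u in HK_nbhd e eps x v) (x u - x v).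

Definition HK_infl_edge (R : realFieldType) (V : finType) (e : rel V) (eps : R)
  (x : V -> R) (u w : V) : bool :=
  e u w && (`|x u - x w| <= eps).

(* Main.v *)
Require Import Defs.
From HB Require Import structures.
From mathcomp Require Import all_boot all_order all_algebra.
From mathcomp Require Import lra.
Import Order.TTheory GRing.Theory Num.Theory.
Local Open Scope ring_scope.

Theorem lemma2 (R : realFieldType) (V : finType) (e : rel V) (eps : R)
  (x : V -> R) (c : R) :
  simple_graph e -> 0 < eps ->
  \sum_(v : V) #|HK_nbhd e eps x v|%:R * `|HK_move e eps x v|
  >= 2 * \sum_(p : V * V | [&& x p.1 <= c, ~~ (x p.2 <= c)
                              & HK_infl_edge e eps x p.1 p.2])
         `|x p.1 - x p.2|.
Proof.
move=> [esym eirr] _.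
set w := fun u v => e u v && (`|x u - x v| <= eps).
set s := fun v : V => if x v <= c then (1 : R) else -1.
set H := fun p : V * V => if w p.2 p.1 then s p.1 * (x p.2 - x p.1) else 0.
have wsym : forall u v, w u v = w v u.
  by move=> u v; rewrite /w esym distrC.
have step1 : forall v, #|HK_nbhd e eps x v|%:R * `|HK_move e eps x v|
    = `|\sum_u (if w u v then x u - x v else 0)|.
  move=> v; rewrite /HK_move normrM mulrA.
  have hpos : (0 < #|HK_nbhd e eps x v|)%N.
    by apply/card_gt0P; exists v; rewrite /HK_nbhd !inE eqxx orbT.
  rewrite normfV normr_nat mulfV ?pnatr_eq0 -?lt0n // mul1r.
  congr `|_|; rewrite big_mkcond /=; apply: eq_bigr => u _.
  rewrite /HK_nbhd !inE /w.
  case: (eqVneq u v) => [->|]; first by rewrite subrr !if_same.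
  by rewrite orbF.
rewrite (eq_bigr _ (fun v _ => step1 v)).
have step2 : \sum_v s v * \sum_u (if w u v then x u - x v else 0)
    <= \sum_v `|\sum_u (if w u v then x u - x v else 0)|.
  apply: ler_sum => v _; rewrite /s; case: ifP => _.
    by rewrite mul1r ler_norm.
  by rewrite mulN1r -normrN ler_norm.
apply: le_trans step2.
have -> : \sum_v s v * \sum_u (if w u v then x u - x v else 0) = \sum_p H p.
  rewrite -(pair_bigA _ (fun v u => H (v, u))) /=.
  apply: eq_bigr => v _; rewrite mulr_sumr; apply: eq_bigr => u _.
  by rewrite /H /=; case: ifP; rewrite ?mulr0.
set L := fun p : V * V => [&& x p.1 <= c, ~~ (x p.2 <= c)
                              & HK_infl_edge e eps x p.1 p.2].
have swapinj : injective (fun p : V * V => (p.2, p.1)).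
  by move=> [a b] [a' b'] /= [-> ->].
have Hsw : \sum_p H p = \sum_p H (p.2, p.1).
  exact: (reindex_inj swapinj).
have Lsw : \sum_(p | L p) `|x p.1 - x p.2| = \sum_(p | L (p.2, p.1)) `|x p.1 - x p.2|.
  rewrite (reindex_inj swapinj) /=; apply: eq_bigr => p _; by rewrite distrC.
have pt : forall p, H p + H (p.2, p.1) =
    2 * ((if L p then `|x p.1 - x p.2| else 0)
       + (if L (p.2, p.1) then `|x p.1 - x p.2| else 0)).
  move=> [a b]; rewrite /H /L /HK_infl_edge /= -/(w a b) -/(w b a) (wsym b a).
  case: (w a b); last by rewrite !andbF addr0 mulr0.
  rewrite !andbT /s.
  case: (lerP (x a) c) => ha; case: (lerP (x b) c) => hb /=.
  - lra.
  - rewrite distrC ger0_norm; lra.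
  - rewrite ger0_norm; lra.
  - lra.
have E : \sum_p H p + \sum_p H p = 2 * (\sum_(p | L p) `|x p.1 - x p.2|
    + \sum_(p | L p) `|x p.1 - x p.2|).
  rewrite {2}Hsw -big_split /= (eq_bigr _ (fun p _ => pt p)) -mulr_sumr.
  by rewrite big_split /= -!big_mkcond /= -Lsw.
rewrite -/L; lra.
Qed.
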